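(* There exists a Lindelöf basically disconnected Hausdorff topological group which is not a $P$-space if and only if there exists a nondiscrete Lindelöf Boolean basically disconnected Hausdorff topological group of countable pseudocharacter.
   Context: All spaces are Tychonoff. A space is basically disconnected if the closure of every cozero set in it is open. A space is a $P$-space if every $G_\delta$-subset is open. For a topological group, countable pseudocharacter means the identity element is a $G_\delta$-set. A group is Boolean if every element has order at most $2$. *)

(* Defs.v *)
From HB Require Import structures.
From mathcomp Require Import all_boot all_order all_algebra.
From mathcomp Require Import all_classical all_reals all_analysis.
From mathcomp Require Import Rstruct Rstruct_topology.
Set Implicit Arguments. Unset Strict Implicit. Unset Printing Implicit Defensive.
Import Order.TTheory GRing.Theory Num.Theory.
Local Open Scope classical_set_scope.

Record topGroup (T : topologicalType) := TopGroup {
  tg_mul : T -> T -> T;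
  tg_inv : T -> T;
  tg_one : T;
  tg_mulA : forall x y z, tg_mul x (tg_mul y z) = tg_mul (tg_mul x y) z;
  tg_mul1g : forall x, tg_mul tg_one x = x;
  tg_mulg1 : forall x, tg_mul x tg_one = x;
  tg_mulVg : forall x, tg_mul (tg_inv x) x = tg_one;
  tg_mulgV : forall x, tg_mul x (tg_inv x) = tg_one;
  tg_mul_cont : continuous (fun p : T * T => tg_mul p.1 p.2);
  tg_inv_cont : continuous tg_inv }.

Definition lindelof (T : topologicalType) : Prop :=
  forall C : set (set T), (forall U, C U -> open U) ->
    \bigcup_(U in C) U = setT ->
    exists D : set (set T), [/\ D `<=` C, countable D & \bigcup_(U in D) U = setT].

Definition cozero (T : topologicalType) (f : T -> Rdefinitions.R) : set T := [set x | f x != 0%R].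

Definition basically_disconnected (T : topologicalType) : Prop :=
  forall f : T -> Rdefinitions.R, continuous f -> open (closure (cozero f)).

Definition Gdelta (T : topologicalType) (A : set T) : Prop :=
  exists U : nat -> set T, (forall n, open (U n)) /\ A = \bigcap_n U n.

Definition P_space (T : topologicalType) : Prop :=
  forall A : set T, Gdelta A -> open A.

Definition discrete_top (T : topologicalType) : Prop := forall A : set T, open A.

Definition boolean_group (T : topologicalType) (G : topGroup T) : Prop :=
  forall x : T, tg_mul G x x = tg_one G.

Definition countable_pseudocharacter (T : topologicalType) (G : topGroup T) : Prop :=
  Gdelta [set tg_one G].

(* Main.v *)
Require Import Defs.
From HB Require Import structures.
From mathcomp Require Import all_boot all_order all_algebra.
From mathcomp Require Import all_classical all_reals all_analysis.
From mathcomp Require Import Rstruct Rstruct_topology.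
Unset Printing Implicit Defensive.
Import Order.TTheory GRing.Theory Num.Theory.
Local Open Scope classical_set_scope.

Module MP1.
Section GroupBasics.
Context {T : topologicalType} (G : topGroup T).
Local Notation mul := (tg_mul G).
Local Notation inv := (tg_inv G).
Local Notation one := (tg_one G).

Lemma mulKg x y : mul (inv x) (mul x y) = y.
Proof. by rewrite tg_mulA tg_mulVg tg_mul1g. Qed.
Lemma mulVKg x y : mul x (mul (inv x) y) = y.
Proof. by rewrite tg_mulA tg_mulgV tg_mul1g. Qed.
Lemma mulgK x y : mul (mul y x) (inv x) = y.
Proof. by rewrite -tg_mulA tg_mulgV tg_mulg1. Qed.
Lemma mulgVK x y : mul (mul y (inv x)) x = y.
Proof. by rewrite -tg_mulA tg_mulVg tg_mulg1. Qed.
Lemma mulg_injl a x y : mul a x = mul a y -> x = y.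
Proof. by move=> h; rewrite -(mulKg a x) h mulKg. Qed.
Lemma mulg_injr a x y : mul x a = mul y a -> x = y.
Proof. by move=> h; rewrite -(mulgK a x) h mulgK. Qed.
Lemma invgK x : inv (inv x) = x.
Proof. by apply: (@mulg_injl (inv x)); rewrite tg_mulgV tg_mulVg. Qed.
Lemma invg_eq1 x y : mul x y = one -> y = inv x.
Proof. by move=> h; apply: (@mulg_injl x); rewrite h tg_mulgV. Qed.
Lemma invg1 : inv one = one.
Proof. by rewrite -(@invg_eq1 one one) // tg_mulg1. Qed.
Lemma invMg x y : inv (mul x y) = mul (inv y) (inv x).
Proof.
apply: (@mulg_injl (mul x y)); rewrite tg_mulgV -tg_mulA [mul y _]tg_mulA.
by rewrite tg_mulgV tg_mul1g tg_mulgV.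
Qed.
Lemma mulg_cont (X : topologicalType) (f g : X -> T) :
  continuous f -> continuous g -> continuous (fun x => mul (f x) (g x)).
Proof.
move=> cf cg x; apply: (@continuous2_cvg _ _ _ _ _ _ f g (fun u v => mul u v)).
- by move: (@tg_mul_cont _ G (f x, g x)); apply: cvg_trans. 
- exact: cf.
- exact: cg.
Qed.

Lemma invg_cont (X : topologicalType) (f : X -> T) :
  continuous f -> continuous (fun x => inv (f x)).
Proof.
move=> cf x; apply: (continuous_comp (f := f) (g := inv)); first exact: cf.
exact: tg_inv_cont.
Qed.

Lemma lmul_cont a : continuous (mul a).
Proof. by apply: mulg_cont => //; [exact: cst_continuous | move=> x]. Qed.
Lemma rmul_cont a : continuous (fun x => mul x a).
Proof. by apply: mulg_cont => //; [move=> x | exact: cst_continuous]. Qed.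

Lemma nbhs_translate a (A : set T) :
  nbhs a A <-> nbhs one (fun x => A (mul a x)).
Proof.
split => h.
  have c := @lmul_cont a one; rewrite /continuous_at tg_mulg1 in c.
  exact: c _ h.
have c := @lmul_cont (inv a) a; rewrite /continuous_at tg_mulVg in c.
have h2 : nbhs a [set y | A (mul a (mul (inv a) y))] := c _ h.
by apply: filterS h2 => y /=; rewrite mulVKg.
Qed.

Lemma open_nbhs_small (W : set T) x : nbhs x W ->
  exists V, [/\ open V, V x & V `<=` W].
Proof. by rewrite nbhsE => -[V [oV Vx] sVW]; exists V. Qed.

Lemma mul_nbhs (W : set T) : nbhs one W ->
  exists V : set T, [/\ open V, V one, (forall x, V x -> V (inv x)) &
                     (forall x y, V x -> V y -> W (mul x y))].
Proof.
move=> nW.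
have c := @tg_mul_cont _ G (one, one); rewrite /continuous_at /= tg_mulg1 in c.
case: (c W nW) => -[A B] /= [nA nB] sAB.
have [Ob [oOb Ob1 sO]] := open_nbhs_small _ _ (filterI nA nB).
exists (Ob `&` (inv @^-1` Ob)); split.
- apply: openI => //; exact: (open_comp (fun x _ => @tg_inv_cont _ G x)).
- by split => //=; rewrite invg1.
- by move=> x [Ox Oix]; split => //=; rewrite invgK.
- move=> x y [/sO [Ax _] _] [/sO [_ By] _].
  exact: (sAB (x, y)).
Qed.

End GroupBasics.

End MP1.
Import MP1.

Module MP2.

Section Discrete.
Context {T : topologicalType} (G : topGroup T).
Local Notation mul := (tg_mul G).
Local Notation inv := (tg_inv G).
Local Notation one := (tg_one G).

Lemma open_one_discrete : open [set one] -> discrete_top T.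
Proof.
move=> o1 A; rewrite openE => a Aa.
have n1 : nbhs one [set one] by apply: open_nbhs_nbhs; split.
rewrite /interior nbhs_translate; apply: filterS n1.
by move=> x /= ->; rewrite tg_mulg1.
Qed.
End Discrete.

Lemma right_to_left :
  (exists (T : topologicalType) (G : topGroup T),
      [/\ ~ discrete_top T, lindelof T, boolean_group G,
          basically_disconnected T & hausdorff_space T]
      /\ countable_pseudocharacter G) ->
  (exists (T : topologicalType) (G : topGroup T),
      [/\ lindelof T, basically_disconnected T, hausdorff_space T & ~ P_space T]).
Proof.
move=> [T [G [[nd li _ bd hs] cp]]]; exists T, G; split => // P.
by apply: nd; apply: (open_one_discrete G); apply: P.
Qed.

Section Lind.
Context {T : topologicalType}.

Lemma lindelof_closed_seq (E : set T) (W : T -> set T) (x0 : T) :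
  lindelof T -> closed E -> E x0 ->
  (forall x, E x -> open (W x) /\ W x x) ->
  exists s : nat -> T, (forall n, E (s n)) /\ E `<=` \bigcup_n W (s n).
Proof.
move=> li cE Ex0 hW.
pose C := [set U | (exists2 x, E x & U = W x) \/ U = ~` E].
have oC : forall U, C U -> open U.
  move=> U [[x Ex ->]|->]; [exact: (hW x Ex).1 | exact: closed_openC].
have cov : \bigcup_(U in C) U = setT.
  apply/seteqP; split => // y _.
  have [Ey|nEy] := pselect (E y).
    by exists (W y); [left; exists y | exact: (hW y Ey).2].
  by exists (~` E); [right|].
have [D [DC cD covD]] := li C oC cov.
have [g gs] : exists g : nat -> set T, set_surj setT D g.
  by apply/pcard_surjP.
pose s n := match pselect (exists x, E x /\ g n = W x) with
  | left h => projT1 (cid h) | right _ => x0 end.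
exists s; split.
  move=> n; rewrite /s; case: pselect => // h.
  by case: (projT2 (cid h)).
move=> y Ey.
have : setT y by [].
rewrite -covD => -[U DU Uy].
have [n _ gnU] := gs U DU.
exists n => //; rewrite /s; case: pselect => [h|].
  by case: (projT2 (cid h)) => _ <-; rewrite gnU.
case: (DC U DU) => [[x Ex UW]|UE].
  by case; exists x; split => //; rewrite gnU.
by move: Uy; rewrite UE.
Qed.

End Lind.

End MP2.
Import MP2.

Module MP3.
Local Open Scope relation_scope.

Definition gunif {T : topologicalType} (G : topGroup T) : Type := T.
HB.instance Definition _ (T : topologicalType) (G : topGroup T) :=
  Choice.copy (gunif G) T.

Definition gent {T : topologicalType} (G : topGroup T) : set_system (gunif G * gunif G) :=
  [set E | exists W : set T, nbhs (tg_one G) W /\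
     [set pq : T * T | W (tg_mul G (tg_inv G pq.1) pq.2)] `<=` E].

Section Gent.
Context {T : topologicalType} (G : topGroup T).
Local Notation mul := (tg_mul G).
Local Notation inv := (tg_inv G).
Local Notation one := (tg_one G).

Lemma gent_filter : Filter (gent G).
Proof.
split.
- by exists setT; split => //; exact: filterT.
- move=> P Q [W1 [n1 s1]] [W2 [n2 s2]]; exists (W1 `&` W2); split.
    exact: filterI.
  by move=> pq [/s1 ? /s2 ?].
- by move=> P Q PQ [W [nW sW]]; exists W; split => //; apply: subset_trans PQ.
Qed.

Lemma gent_diag A : gent G A -> diagonal `<=` A.
Proof.
move=> [W [nW sW]] [p q] /= pq; apply: sW => /=; rewrite -[q]pq tg_mulVg.
exact: nbhs_singleton.
Qed.

Lemma gent_inv A : gent G A -> gent G A^-1.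
Proof.
move=> [W [nW sW]]; exists (inv @^-1` W); split.
  have c := @tg_inv_cont _ G one; rewrite /continuous_at invg1 in c.
  exact: c.
move=> [p q] /= h; apply: sW => /=.
by move: h; rewrite invMg invgK.
Qed.

Lemma gent_split A : gent G A -> exists2 B, gent G B & B \; B `<=` A.
Proof.
move=> [W [nW sW]]; have [V [oV V1 Vs VW]] := mul_nbhs G W nW.
exists [set pq : T * T | V (mul (inv pq.1) pq.2)].
  exists V; split => //; exact: open_nbhs_nbhs.
move=> [p r] [q /= h1 h2]; apply: sW => /=.
have := VW _ _ h1 h2; rewrite -tg_mulA mulVKg; exact.
Qed.

End Gent.

HB.instance Definition _ (T : topologicalType) (G : topGroup T) :=
  isUniform.Build (gunif G) (gent_filter G) (@gent_diag _ G) (@gent_inv _ G) (@gent_split _ G).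

Section CReg.
Context {T : topologicalType} (G : topGroup T).
Local Notation mul := (tg_mul G).
Local Notation inv := (tg_inv G).
Local Notation one := (tg_one G).

Lemma group_separator (x : T) (V : set T) : open V -> V x ->
  exists f : T -> Rdefinitions.R, [/\ continuous f, range f `<=` `[0%R, 1%R],
     f x = 0%R & forall y, ~ V y -> f y = 1%R].
Proof.
move=> oV Vx.
have nV : nbhs x V by apply: open_nbhs_nbhs.
move: nV; rewrite (nbhs_translate G) => nV.
have us : uniform_separator [set x] (~` V).
  exists (Uniform.class (gunif G)).
  exists [set pq : T * T | (fun z => V (mul x z)) (mul (inv pq.1) pq.2)]; split.
  - by exists (fun z => V (mul x z)); split.
  - rewrite -subset0 => -[p q] [[/= -> nVq]]; by rewrite mulVKg.
  - move=> p U [E [W [nW sW]] sEU]; rewrite (nbhs_translate G).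
    by apply: filterS nW => z Wz; apply: sEU; apply/mem_set; apply: sW => /=; rewrite mulKg.
have /(@uniform_separatorP _ Rdefinitions.R) [f [cf fr f0 f1]] := us.
exists f; split => //.
  by apply: f0; exists x.
by move=> y nVy; apply: f1; exists y.
Qed.
End CReg.

End MP3.
Import MP3.

Module MP4.
Local Open Scope ring_scope.

Section Clopen.
Context {T : topologicalType} (G : topGroup T).

Lemma clopen_nbhd (x : T) (V : set T) : basically_disconnected T -> open V -> V x ->
  exists D : set T, [/\ open D, closed D, D x & D `<=` V].
Proof.
move=> bd oV Vx.
have [f [cf fr f0 f1]] := group_separator G x V oV Vx.
pose c : Rdefinitions.R := 2^-1.
have c0 : 0 < c by rewrite /c invr_gt0.
have c1 : c < 1 by rewrite /c invf_lt1 // ltr1n.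
pose h : T -> (Rdefinitions.R)^o := ((f \min cst c) - cst c)%R.
have ch : continuous h.
  move=> y; apply: continuousB; last exact: cst_continuous.
  by apply: continuous_min; [exact: cf | exact: cst_continuous].
have cozE y : cozero h y <-> f y < c.
  change (Order.min (f y) c - c != 0 <-> f y < c); rewrite subr_eq0 minEle.
  have [fc|fc] := leP (f y) c; first by rewrite lt_neqAle fc andbT.
  by rewrite eqxx; split => // /(lt_trans fc); rewrite ltxx.
exists (closure (cozero h)); split.
- exact: bd.
- exact: closed_closure.
- by apply: subset_closure; apply/cozE; rewrite f0.
- move=> y hy; apply: contrapT => nVy.
  have cl : closed (f @^-1` [set r | r <= c]).
    by apply: preimage_closed; [move=> z _; exact: cf | exact: closed_le].
  have : (f @^-1` [set r | r <= c]) y.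
    rewrite ((closure_id _).1 cl); apply: closureS hy => z /cozE /ltW.
    by [].
  by rewrite /= f1 // leNgt c1.
Qed.
End Clopen.

Section LindF.
Context {T : topologicalType}.

Lemma lindelof_Fsigma_seq (E : nat -> set T) (W : T -> set T) (x0 : T) :
  lindelof T -> (forall m, closed (E m)) -> (\bigcup_m E m) x0 ->
  (forall x, (\bigcup_m E m) x -> open (W x) /\ W x x) ->
  exists s : nat -> T, (forall n, (\bigcup_m E m) (s n)) /\
     \bigcup_m E m `<=` \bigcup_n W (s n).
Proof.
move=> li cE Ex0 hW.
pose C m := [set U | (exists2 x, E m x & U = W x) \/ U = ~` E m].
have hD : forall m, exists D : set (set T),
    [/\ D `<=` C m, countable D & \bigcup_(U in D) U = setT].
  move=> m; apply: li.
    move=> U [[x Ex ->]|->]; last exact: closed_openC.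
    by apply: (hW x _).1; exists m.
  apply/seteqP; split => // y _.
  have [Ey|nEy] := pselect (E m y).
    by exists (W y); [left; exists y | apply: (hW y _).2; exists m].
  by exists (~` E m); [right|].
have [Dm hDm] := choice hD.
pose D := \bigcup_(m in setT) Dm m.
have cD : countable D.
  apply: bigcup_countable; first exact: countableP.
  by move=> m _; case: (hDm m).
have [g gs] : exists g : nat -> set T, set_surj setT D g.
  by apply/pcard_surjP.
pose s n := match pselect (exists x, (\bigcup_m E m) x /\ g n = W x) with
  | left h => projT1 (cid h) | right _ => x0 end.
exists s; split.
  move=> n; rewrite /s; case: pselect => // h.
  by case: (projT2 (cid h)).
move=> y [m _ Ey].
have [DC _ covD] := hDm m.
have : setT y by [].
rewrite -covD => -[U DU Uy].
have [n _ gnU] := gs U (ex_intro2 _ _ m I DU).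
exists n => //; rewrite /s; case: pselect => [h|].
  by case: (projT2 (cid h)) => _ <-; rewrite gnU.
case: (DC U DU) => [[x Ex UW]|UE].
  by case; exists x; split; [exists m | rewrite gnU].
by move: Uy; rewrite UE.
Qed.
End LindF.

End MP4.
Import MP4.

Module MP5.
Local Open Scope ring_scope.

Section Frolik.
Context {T : topologicalType} (G : topGroup T).
Local Notation mul := (tg_mul G).
Local Notation inv := (tg_inv G).
Local Notation one := (tg_one G).
Hypotheses (li : lindelof T) (bd : basically_disconnected T)
  (hs : hausdorff_space T) (cp : countable_pseudocharacter G).

Let F := [set x | mul x x = one].

Let inv_cont : continuous inv := @tg_inv_cont _ G.

Lemma sep_inv x : ~ F x -> exists D : set T,
  [/\ open D, closed D, D x & forall y, D y -> ~ D (inv y)].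
Proof.
move=> nFx.
have xix : x != inv x.
  apply/eqP => xe; apply: nFx; rewrite /F /= {2}xe; exact: tg_mulgV.
move: hs; rewrite open_hausdorff => /(_ _ _ xix) [[A B] /= [/set_mem Ax /set_mem Bix]].
case=> oA oB /eqP AB0.
pose V := A `&` (inv @^-1` B).
have oV : open V by apply: openI => //; apply: open_comp => // z _; exact: inv_cont.
have [D [oD cD Dx DV]] := clopen_nbhd G x V bd oV (conj Ax Bix).
exists D; split => // y Dy Diy.
have [Ay _] := DV y Dy.
have [_ /=] := DV _ Diy; rewrite invgK => By.
by have : (A `&` B) y by []; rewrite AB0.
Qed.


Section Disj.
Variable d : nat -> set T.
Hypotheses (od : forall n, open (d n)) (cd : forall n, closed (d n))
  (dd : forall n y, d n y -> ~ d n (inv y)).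

Fixpoint pre n : set T := if n is k.+1 then pre k `|` d k `|` (inv @^-1` d k) else set0.

Lemma preP n y : pre n y <-> exists k, (k < n)%N /\ (d k y \/ d k (inv y)).
Proof.
elim: n => [|n IH] /=; first by split => [[]|[k []]].
split.
  case=> [[/IH [k [kn h]]|dy]|diy]; first by exists k; split => //; rewrite ltnS ltnW.
    by exists n; split => //; left.
  by exists n; split => //; right.
move=> [k [kn h]]; move: kn h; rewrite ltnS leq_eqVlt => /orP [/eqP -> h|kn h].
  by case: h => h; [left; right | right].
by left; left; apply/IH; exists k.
Qed.

Lemma pre_clopen n : open (pre n) /\ closed (pre n).
Proof.
elim: n => [|n [oP cP]] /=; first by split; [exact: open0 | exact: closed0].
have oi : open (inv @^-1` d n) by apply: open_comp => // z _; exact: inv_cont.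
have ci : closed (inv @^-1` d n) by apply: preimage_closed => // z _; exact: inv_cont.
split; [exact: (openU (openU oP (od n)) oi) | exact: (closedU (closedU cP (cd n)) ci)].
Qed.

Definition U n := d n `\` pre n.

Lemma U_clopen n : open (U n) /\ closed (U n).
Proof.
have [oP cP] := pre_clopen n; split.
  exact: (openI (od n) (closed_openC cP)).
exact: (closedI (cd n) (open_closedC oP)).
Qed.

Lemma U_uniq n m y : U n y -> U m y -> n = m.
Proof.
move=> [dn pn] [dm pm]; have [nm|mn|//] := ltngtP n m.
  by case: pm; apply/preP; exists n; split => //; left.
by case: pn; apply/preP; exists m; split => //; left.
Qed.

Lemma U_inv n m y : U n y -> ~ U m (inv y).
Proof.
move=> [dn pn] [dm pm].
have [nm|mn|nm] := ltngtP n m.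
- by apply: pm; apply/preP; exists n; split => //; right; rewrite invgK.
- by apply: pn; apply/preP; exists m; split => //; right.
- by move: dm; rewrite -nm => dm; exact: dd dn dm.
Qed.

Lemma U_cover y : (exists n, d n y) -> exists k, U k y \/ U k (inv y).
Proof.
move=> [n dny].
have : d n y \/ d n (inv y) by left.
elim/ltn_ind: n {dny} => n IH h.
have [py|npy] := pselect (pre n y).
  by have /preP [k [kn hk]] := py; exact: IH kn hk.
have [piy|npiy] := pselect (pre n (inv y)).
  have /preP [k [kn hk]] := piy; apply: IH kn _.
  by case: hk; rewrite ?invgK; [right|left].
by exists n; case: h => h; [left|right].
Qed.

Fixpoint Ucum n : set T := if n is k.+1 then Ucum k `|` U k else set0.

Lemma UcumP n y : Ucum n y -> exists k, (k < n)%N /\ U k y.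
Proof.
elim: n => [|n IH] //= [/IH [k [kn h]]|h]; first by exists k; rewrite ltnS ltnW.
by exists n.
Qed.

Lemma UcumI n k y : (k < n)%N -> U k y -> Ucum n y.
Proof.
elim: n => [|n IH] //= kn Uk.
move: kn; rewrite ltnS leq_eqVlt => /orP [/eqP kn|kn].
  by right; rewrite -kn.
by left; apply: IH.
Qed.

Lemma Ucum_closed n : closed (Ucum n).
Proof.
elim: n => [|n c] /=; first exact: closed0.
exact: (closedU c (U_clopen n).2).
Qed.

Definition gU (y : T) : Rdefinitions.R :=
  match pselect (exists n, U n y) with
  | left h => ((projT1 (cid h)).+1%:R)^-1 | right _ => 0 end.

Lemma gUE n y : U n y -> gU y = (n.+1%:R)^-1.
Proof.
move=> Uny; rewrite /gU; case: pselect => [h|]; last by case; exists n.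
by case: (cid h) => k /= Uky; rewrite (U_uniq _ _ _ Uky Uny).
Qed.

Lemma gU0 y : ~ (exists n, U n y) -> gU y = 0.
Proof. by rewrite /gU; case: pselect. Qed.

Lemma gU_ge0 y : 0 <= gU y.
Proof. by rewrite /gU; case: pselect => // h; rewrite invr_ge0. Qed.

Lemma cozero_gU y : cozero gU y <-> exists n, U n y.
Proof.
rewrite /cozero /=; split.
  by move=> h; apply: contrapT => nh; move: h; rewrite gU0 // eqxx.
by move=> [n Uny]; rewrite (gUE _ _ Uny) invr_eq0 pnatr_eq0.
Qed.

Lemma gU_cont : continuous gU.
Proof.
move=> y.
have [[n Uny]|nU] := pselect (exists n, U n y).
  apply: (cvg_near_cst (gU y)).
  have nb : nbhs y (U n) by apply: open_nbhs_nbhs; split => //; exact: (U_clopen n).1.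
  by apply: filterS nb => z Unz; rewrite (gUE _ _ Unz) (gUE _ _ Uny).
rewrite /continuous_at (gU0 _ nU); apply/(@cvgrPdist_lt _ (Rdefinitions.R)^o) => eps eps0.
pose m := Num.trunc (eps^-1).
have hm : (m.+1%:R)^-1 < eps.
  by rewrite invf_plt ?posrE //; exact: truncnS_gt.
have nb : nbhs y (~` Ucum m.+1).
  apply: open_nbhs_nbhs; split; first exact/closed_openC/Ucum_closed.
  by move=> /UcumP [k [_ Uk]]; apply: nU; exists k.
apply: filterS nb => z nUz; rewrite sub0r normrN ger0_norm ?gU_ge0 //.
have [[k Ukz]|nk] := pselect (exists k, U k z); last by rewrite gU0.
rewrite (gUE _ _ Ukz); apply: le_lt_trans hm.
have km : (m < k)%N.
  rewrite ltnNge; apply/negP => km; apply: nUz; apply: (UcumI _ _ _ _ Ukz).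
  by rewrite ltnS.
rewrite lef_pV2 ?posrE ?ltr0n // ler_nat; exact: ltnW.
Qed.

End Disj.

Lemma frolik : nbhs one F.
Proof.
have [Oc [oO O1]] := cp.
pose E m := [set x | ~ Oc m (mul x x)].
have sq_cont : continuous (fun x => mul x x).
  by apply: mulg_cont => x; exact: cvg_id.
have cE m : closed (E m).
  have -> : E m = ~` ((fun x => mul x x) @^-1` Oc m) by [].
  apply: open_closedC; apply: open_comp => // z _; exact: sq_cont.
have EF x : (\bigcup_m E m) x <-> ~ F x.
  split.
    move=> [m _ h] Fx; apply: h; rewrite /= Fx.
    by have : [set one] one by []; rewrite O1; apply.
  move=> nFx; apply: contrapT => nE; apply: nFx.
  have : (\bigcap_n Oc n) (mul x x).
    move=> m _; apply: contrapT => nO; apply: nE; by exists m.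
  by rewrite -O1.
have [[x0 nFx0]|allF] := pselect (exists x, ~ F x); last first.
  have -> : F = setT.
    by apply/seteqP; split => // x _; apply: contrapT => h; apply: allF; exists x.
  exact: filterT.
have hD : forall x, exists D : set T, ~ F x ->
    [/\ open D, closed D, D x & forall y, D y -> ~ D (inv y)].
  move=> x; have [Fx|nFx] := pselect (F x); first by exists setT.
  by have [D hd] := sep_inv x nFx; exists D.
have [Dx hDx] := choice hD.
have hW : forall x, (\bigcup_m E m) x -> open (Dx x) /\ Dx x x.
  by move=> x /EF /hDx [].
have [s [sE scov]] := lindelof_Fsigma_seq E Dx x0 li cE ((EF x0).2 nFx0) hW.
pose d n := Dx (s n).
have od n : open (d n) by have [] := hDx (s n) ((EF _).1 (sE n)).
have cd n : closed (d n) by have [] := hDx (s n) ((EF _).1 (sE n)).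
have dd n y : d n y -> ~ d n (inv y).
  by have [_ _ _ hh] := hDx (s n) ((EF _).1 (sE n)); exact: hh.
have dcov y : ~ F y -> exists n, d n y.
  by move=> /EF /scov [n _ h]; exists n.
pose cl := closure (cozero (gU d)).
have cl_open : open cl by apply: bd; exact: (gU_cont d od cd).
have ncl1 : ~ cl one.
  move=> c1.
  have n1 : nbhs one (cl `&` inv @^-1` cl).
    apply: filterI; first by apply: open_nbhs_nbhs.
    have c := inv_cont one; rewrite /continuous_at invg1 in c; apply: c.
    exact: open_nbhs_nbhs.
  have [w [/cozero_gU [n Unw] [_ /= ciw]]] := c1 _ n1.
  have nb : nbhs (inv w) (inv @^-1` U d n).
    apply: open_nbhs_nbhs; split; last by rewrite /= invgK.
    apply: open_comp; [move=> z _; exact: inv_cont | exact: (U_clopen d od cd n).1].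
  have [z [/cozero_gU [k Ukz] /= Unz]] := ciw _ nb.
  exact: (U_inv d dd k n z Ukz Unz).
pose Ob := ~` cl `&` ~` (inv @^-1` cl).
have nOb : nbhs one Ob.
  apply: open_nbhs_nbhs; split; last by split => //=; rewrite invg1.
  apply: openI; first exact/closed_openC/closed_closure.
  apply: closed_openC; apply: preimage_closed; last exact: closed_closure.
  by move=> z _; exact: inv_cont.
apply: filterS nOb => y [ncy nciy]; apply: contrapT => nFy.
have [k [Uk|Uk]] := U_cover d y (dcov y nFy).
- by apply: ncy; apply: subset_closure; apply/cozero_gU; exists k.
- by apply: nciy; apply: subset_closure; apply/cozero_gU; exists k.
Qed.

End Frolik.

End MP5.
Import MP5.

Module MP6.

Section Narrow.
Context {T : topologicalType} (G : topGroup T).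
Local Notation mul := (tg_mul G).
Local Notation inv := (tg_inv G).
Local Notation one := (tg_one G).
Hypothesis li : lindelof T.

Lemma sym_nbhs (U : set T) : nbhs one U -> exists V : set T,
  [/\ open V, V one, (forall x, V x -> V (inv x)), (forall x y, V x -> V y -> U (mul x y))
    & V `<=` U].
Proof.
move=> nU; have [V [oV V1 Vs VU]] := mul_nbhs G U nU.
exists V; split => // x Vx; rewrite -(tg_mulg1 G x); exact: VU.
Qed.

Lemma narrow_fam (U : set T) : nbhs one U -> exists w : nat -> set T,
  (forall k, open (w k) /\ w k one) /\
  forall g, exists k, forall x, w k x -> U (mul (mul g x) (inv g)).
Proof.
move=> nU.
have [V1 [oV1 V11 V1s V1U _]] := sym_nbhs U nU.
have [V [oV V0 Vs VV _]] := sym_nbhs V1 (open_nbhs_nbhs (conj oV1 V11)).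
have VV1 : V `<=` V1 by move=> x Vx; rewrite -(tg_mulg1 G x); exact: VV.
pose W x := [set y | V (mul (inv x) y)].
have hW : forall x, (\bigcup_(m in setT) (fun _ : nat => @setT T) m) x -> open (W x) /\ W x x.
  move=> x _; split; last by rewrite /W /= tg_mulVg.
  by apply: open_comp => // z _; exact: lmul_cont.
have [s [_ scov]] := lindelof_Fsigma_seq (fun _ => setT) W one li (fun _ => closedT)
  (ex_intro2 _ _ 0%N I I) hW.
exists (fun k => [set x | V (mul (mul (inv (s k)) x) (s k))]); split.
  move=> k; split; last by rewrite /= tg_mulg1 tg_mulVg.
  apply: open_comp => // z _.
  apply: (mulg_cont G _ (mul (inv (s k))) (fun=> s k)); [exact: lmul_cont | move=> t; exact: cvg_cst].
move=> g; have [k _ hk] := scov (inv g) (ex_intro2 _ _ 0%N I I).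
exists k => x hx; rewrite /W /= in hk.
set c := s k in hk hx *; set v := mul (inv c) (inv g) in hk.
have -> : mul (mul g x) (inv g) = mul (inv v) (mul (mul (mul (inv c) x) c) v).
  by rewrite /v invMg !invgK !tg_mulA !mulgK.
apply: V1U; first exact: VV1 (Vs _ hk).
exact: VV.
Qed.

End Narrow.

Fixpoint capn {T : Type} (E : nat -> set T) (m : nat) : set T :=
  if m is m'.+1 then capn E m' `&` E m else E 0%N.

Lemma capn_sub {T : Type} (E : nat -> set T) m k : (k <= m)%N -> capn E m `<=` E k.
Proof.
elim: m => [|m IH] /=; first by rewrite leqn0 => /eqP ->.
rewrite leq_eqVlt => /orP [/eqP ->|km]; first by move=> x [].
by move=> x [/IH h _]; apply: h.
Qed.

Section GoodSeq.
Context {T : topologicalType} (G : topGroup T).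
Local Notation mul := (tg_mul G).
Local Notation inv := (tg_inv G).
Local Notation one := (tg_one G).
Hypothesis li : lindelof T.

Definition onbhs (U : set T) := open U /\ U one.

Lemma onbhsI U V : onbhs U -> onbhs V -> onbhs (U `&` V).
Proof. by move=> [oU U1] [oV V1]; split; [exact: openI|]. Qed.

Lemma capn_onbhs (E : nat -> set T) m : (forall k, onbhs (E k)) -> onbhs (capn E m).
Proof. by move=> hE; elim: m => [|m IH] //=; apply: onbhsI. Qed.

Lemma good_seq (A : nat -> set T) : (forall n, onbhs (A n)) ->
  exists V : nat -> set T,
    [/\ (forall n, onbhs (V n)), (forall n x, V n x -> V n (inv x)),
        (forall n x y, V n.+1 x -> V n.+1 y -> V n (mul x y)),
        (forall n, V n `<=` A n) &
        (forall g n, exists m, forall x, V m x -> V n (mul (mul g x) (inv g)))].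
Proof.
move=> hA.
have hshr : forall U : set T, exists V : set T, onbhs U ->
   [/\ onbhs V, (forall x, V x -> V (inv x)), (forall x y, V x -> V y -> U (mul x y))
     & V `<=` U].
  move=> U; have [hU|nU] := pselect (onbhs U); last by exists set0.
  have [V [oV V1 Vs VV VU]] := sym_nbhs G U (open_nbhs_nbhs hU).
  by exists V.
have [shr hs] := choice hshr.
have hfam : forall U : set T, exists w : nat -> set T, onbhs U ->
  (forall k, onbhs (w k)) /\
  forall g, exists k, forall x, w k x -> U (mul (mul g x) (inv g)).
  move=> U; have [hU|nU] := pselect (onbhs U); last by exists (fun=> set0).
  have [w hw] := narrow_fam G li U (open_nbhs_nbhs hU).
  by exists w.
have [fam hf] := choice hfam.
pose fix st (m : nat) : set T * (nat -> set T) :=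
  if m is m'.+1 then
    let p := st m' in
    let Vn := shr (p.1 `&` A m `&` capn p.2 m') in
    (Vn, fun k => p.2 k `&` fam Vn k)
  else let V0 := shr (A 0%N) in (V0, fam V0).
pose V m := (st m).1.
pose E m := (st m).2.
have VS m : V m.+1 = shr (V m `&` A m.+1 `&` capn (E m) m) by [].
have ES m k : E m.+1 k = E m k `&` fam (V m.+1) k by [].
have V0E : V 0%N = shr (A 0%N) by [].
have E0E k : E 0%N k = fam (V 0%N) k by [].
have inv_all : forall m, onbhs (V m) /\ (forall k, onbhs (E m k)).
  elim => [|m [hV hE]].
    rewrite V0E; have [hV _ _ _] := hs _ (hA 0%N).
    by split => // k; rewrite E0E; case: (hf _ hV) => h _; exact: h.
  have hW : onbhs (V m `&` A m.+1 `&` capn (E m) m).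
    by apply: onbhsI; [apply: onbhsI | exact: capn_onbhs].
  have [hV' _ _ _] := hs _ hW.
  split; first by rewrite VS.
  move=> k; rewrite ES; apply: onbhsI => //.
  by case: (hf _ hV') => h _; exact: h.
have hW m : onbhs (V m `&` A m.+1 `&` capn (E m) m).
  have [hV hE] := inv_all m.
  by apply: onbhsI; [apply: onbhsI | exact: capn_onbhs].
have Esub : forall m j k, (j <= m)%N -> E m k `<=` fam (V j) k.
  elim => [|m IH] j k.
    by rewrite leqn0 => /eqP ->; rewrite E0E.
  rewrite leq_eqVlt => /orP [/eqP ->|jm]; rewrite ES; first by move=> x [].
  by move=> x [/(IH j k jm) h _].
exists V; split.
- by move=> n; case: (inv_all n).
- case => [|n] x.
    by rewrite V0E; have [_ h _ _] := hs _ (hA 0%N); exact: h.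
  by rewrite VS; have [_ h _ _] := hs _ (hW n); exact: h.
- move=> n x y; rewrite VS; have [_ _ h _] := hs _ (hW n).
  by move=> Vx Vy; have [[]] := h x y Vx Vy.
- case => [|n] x.
    by rewrite V0E; have [_ _ _ h] := hs _ (hA 0%N); exact: h.
  by rewrite VS; have [_ _ _ h] := hs _ (hW n) => /h [[]].
- move=> g n.
  have [_ hk] := hf _ (inv_all n).1.
  have [k hk'] := hk g.
  exists (maxn n k).+1 => x; rewrite VS; have [_ _ _ h] := hs _ (hW (maxn n k)).
  move=> /h [_ hc]; apply: hk'.
  have h1 := capn_sub (E (maxn n k)) (maxn n k) k (leq_maxr n k) x hc.
  exact: (Esub _ n k (leq_maxl n k) x h1).
Qed.

End GoodSeq.

End MP6.
Import MP6.

Module MP7.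
Local Open Scope quotient_scope.

Record gseq {T : topologicalType} (G : topGroup T) := GSeq {
  gV : nat -> set T;
  gV_onbhs : forall n, open (gV n) /\ gV n (tg_one G);
  gV_sym : forall n x, gV n x -> gV n (tg_inv G x);
  gV_mul : forall n x y, gV n.+1 x -> gV n.+1 y -> gV n (tg_mul G x y);
  gV_conj : forall g n, exists m, forall x, gV m x ->
      gV n (tg_mul G (tg_mul G g x) (tg_inv G g)) }.
Arguments gV {T G} g0 n _.
Arguments gV_onbhs {T G} g0 n.
Arguments gV_sym {T G} g0 n x.
Arguments gV_mul {T G} g0 n x y.
Arguments gV_conj {T G} g0 g n.

Section GN.
Context {T : topologicalType} {G : topGroup T} (S : gseq G).
Local Notation mul := (tg_mul G).
Local Notation inv := (tg_inv G).
Local Notation one := (tg_one G).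
Local Notation V := (gV S).

Definition gN x := forall n, V n x.

Lemma V1 n : V n one. Proof. by case: (gV_onbhs S n). Qed.
Lemma Vsub n x : V n.+1 x -> V n x.
Proof. by move=> h; rewrite -(tg_mulg1 G x); apply: gV_mul => //; exact: V1. Qed.
Lemma gN1 : gN one. Proof. by move=> n; exact: V1. Qed.
Lemma gNV x : gN x -> gN (inv x). Proof. by move=> h n; apply: gV_sym. Qed.
Lemma gNM x y : gN x -> gN y -> gN (mul x y). Proof. by move=> hx hy n; apply: gV_mul. Qed.
Lemma gNJ g x : gN x -> gN (mul (mul g x) (inv g)).
Proof. by move=> hx n; have [m hm] := gV_conj S g n; apply: hm. Qed.

Definition grel : rel T := fun x y => `[< gN (mul (inv x) y) >].
Lemma grel_refl : reflexive grel.
Proof. by move=> x; apply/asboolP; rewrite tg_mulVg; exact: gN1. Qed.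
Lemma grel_sym : symmetric grel.
Proof.
move=> x y; apply/asboolP/asboolP => /gNV; by rewrite invMg invgK.
Qed.
Lemma grel_trans : transitive grel.
Proof.
move=> y x z /asboolP h1 /asboolP h2; apply/asboolP.
by have := gNM _ _ h1 h2; rewrite -tg_mulA mulVKg.
Qed.
End GN.

Definition gerel {T : topologicalType} {G : topGroup T} (S : gseq G) : equiv_rel T :=
  EquivRel (grel S) (grel_refl S) (grel_sym S) (grel_trans S).
Definition Q0 {T : topologicalType} {G : topGroup T} (S : gseq G) := {eq_quot (gerel S)}.
Definition Qt {T : topologicalType} {G : topGroup T} (S : gseq G) := quotient_topology (Q0 S).

Section Quot.
Context {T : topologicalType} {G : topGroup T} (S : gseq G).
Local Notation mul := (tg_mul G).
Local Notation inv := (tg_inv G).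
Local Notation one := (tg_one G).
Local Notation V := (gV S).
Local Notation N := (gN S).
Local Notation Q := (Qt S).
Definition qpi : T -> Q := \pi_Q.
Local Notation pi := qpi.
Lemma qpiK (a : Q) : pi (repr a) = a. Proof. exact: reprK. Qed.

Lemma piP x y : pi x = pi y <-> N (mul (inv x) y).
Proof.
split => h.
  have h' : x = y %[mod_eq (gerel S)] := h.
  by move/eqmodP: h' => /asboolP.
have h' : x = y %[mod_eq (gerel S)] by apply/eqmodP; apply/asboolP.
exact: h'.
Qed.

Definition qmul (a b : Q) : Q := pi (mul (repr a) (repr b)).
Definition qinv (a : Q) : Q := pi (inv (repr a)).
Definition qone : Q := pi one.

Lemma mul_compat x x' y y' : pi x = pi x' -> pi y = pi y' -> pi (mul x y) = pi (mul x' y').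
Proof.
move=> /piP hx /piP hy; apply/piP.
have -> : mul (inv (mul x y)) (mul x' y') =
   mul (mul (mul (inv y) (mul (inv x) x')) y) (mul (inv y) y').
  by rewrite invMg !tg_mulA mulgK.
apply: gNM => //.
by have := gNJ S (inv y) _ hx; rewrite invgK.
Qed.

Lemma inv_compat x x' : pi x = pi x' -> pi (inv x) = pi (inv x').
Proof.
move=> /piP hx; apply/piP; rewrite invgK.
have := gNJ S x _ (gNV S _ hx).
by rewrite invMg invgK !tg_mulA mulgK.
Qed.

Lemma qmul_pi x y : qmul (pi x) (pi y) = pi (mul x y).
Proof. by apply: mul_compat; rewrite qpiK. Qed.
Lemma qinv_pi x : qinv (pi x) = pi (inv x).
Proof. by apply: inv_compat; rewrite qpiK. Qed.

Lemma qmulA : forall x y z, qmul x (qmul y z) = qmul (qmul x y) z.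
Proof.
move=> a b c; rewrite -(qpiK a) -(qpiK b) -(qpiK c).
by rewrite !qmul_pi tg_mulA.
Qed.
Lemma qmul1g : forall x, qmul qone x = x.
Proof. move=> a; rewrite -(qpiK a); set x := repr a; by rewrite /qone qmul_pi tg_mul1g. Qed.
Lemma qmulg1 : forall x, qmul x qone = x.
Proof. move=> a; rewrite -(qpiK a); set x := repr a; by rewrite /qone qmul_pi tg_mulg1. Qed.
Lemma qmulVg : forall x, qmul (qinv x) x = qone.
Proof. move=> a; rewrite -(qpiK a); set x := repr a; by rewrite qinv_pi qmul_pi tg_mulVg. Qed.
Lemma qmulgV : forall x, qmul x (qinv x) = qone.
Proof. move=> a; rewrite -(qpiK a); set x := repr a; by rewrite qinv_pi qmul_pi tg_mulgV. Qed.

Lemma pi_cont : continuous pi.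
Proof. exact: (@pi_continuous T (Q0 S)). Qed.

Lemma pi_preimage_image (A : set T) :
  pi @^-1` (pi @` A) = \bigcup_(m in N) [set w | A (mul w (inv m))].
Proof.
apply/seteqP; split => w /=.
  move=> [a Aa /piP hm]; exists (mul (inv a) w) => //.
  by rewrite /= invMg invgK mulVKg.
move=> [m Nm Awm]; exists (mul w (inv m)) => //; apply/piP.
by rewrite invMg invgK mulgVK.
Qed.

Lemma pi_open (A : set T) : open A -> open (pi @` A).
Proof.
move=> oA.
have : open (pi @^-1` (pi @` A)).
  rewrite pi_preimage_image; apply: bigcup_open => m _.
  apply: open_comp => // z _; exact: (rmul_cont G).
by [].
Qed.

Lemma qmul_cont : continuous (fun p : Q * Q => qmul p.1 p.2).
Proof.
move=> [a b] W /= nW.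
have [W' [oW' W'ab sW]] := @open_nbhs_small Q W _ nW.
have oPW : open (pi @^-1` W') by apply: open_comp => // z _; exact: pi_cont.
have := @tg_mul_cont _ G (repr a, repr b); rewrite /continuous_at /= => c.
have : nbhs (repr a, repr b) ((fun p : T * T => mul p.1 p.2) @^-1` (pi @^-1` W')).
  apply: c; apply: open_nbhs_nbhs; split => //.
case=> -[A B] /= [nA nB] sAB.
have [A' [oA' A'a sA]] := open_nbhs_small _ _ nA.
have [B' [oB' B'b sB]] := open_nbhs_small _ _ nB.
change (filter_prod (nbhs a) (nbhs b) ((fun p : Q * Q => qmul p.1 p.2) @^-1` W)); rewrite /filter_prod /filter_from /=.
exists (pi @` A', pi @` B'); first split.
- apply: (@open_nbhs_nbhs Q); split; first exact: pi_open.
  by exists (repr a) => //; rewrite qpiK.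
- apply: (@open_nbhs_nbhs Q); split; first exact: pi_open.
  by exists (repr b) => //; rewrite qpiK.
move=> [p q] [/= [x1 Ax1 <-] [y1 By1 <-]] /=.
apply: sW; rewrite qmul_pi.
exact: (sAB (x1, y1) (conj (sA _ Ax1) (sB _ By1))).
Qed.

Lemma qinv_cont : continuous qinv.
Proof.
apply/quotient_continuous.
have -> : qinv \o pi = pi \o inv by apply: funext => x /=; rewrite qinv_pi.
move=> x; apply: continuous_comp; [exact: (@tg_inv_cont _ G) | exact: pi_cont].
Qed.

Definition QG : topGroup Q :=
  TopGroup qmulA qmul1g qmulg1 qmulVg qmulgV qmul_cont qinv_cont.

End Quot.

End MP7.
Import MP7.

Module MP8.
Local Open Scope quotient_scope.

Section Images.
Context {X Y : topologicalType} (f : X -> Y).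
Hypotheses (cf : continuous f) (sf : forall y, exists x, f x = y).

Lemma lindelof_image : lindelof X -> lindelof Y.
Proof.
move=> li C oC cov.
pose C' := [set f @^-1` U | U in C].
have oC' : forall W, C' W -> open W.
  by move=> W [U CU <-]; apply: open_comp; [move=> z _; exact: cf | exact: oC].
have cov' : \bigcup_(W in C') W = setT.
  apply/seteqP; split => // x _.
  have : setT (f x) by []; rewrite -cov => -[U CU Ufx].
  by exists (f @^-1` U) => //; exists U.
have [D' [DC' cD' covD']] := li C' oC' cov'.
pose h (W : set X) : set Y := match pselect (exists2 U, C U & W = f @^-1` U) with
  | left e => projT1 (cid2 e) | right _ => set0 end.
have hP : forall W, C' W -> C (h W) /\ W = f @^-1` (h W).
  move=> W [U CU UW]; rewrite /h; case: pselect => [e|]; last first.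
    by case; exists U.
  by case: (cid2 e) => V /= CV ->.
exists (h @` D'); split.
- by move=> _ [W DW <-]; exact: (hP W (DC' W DW)).1.
- exact: (card_le_trans (card_image_le h D') cD').
- apply/seteqP; split => // y _.
  have [x <-] := sf y.
  have : setT x by []; rewrite -covD' => -[W DW Wx].
  exists (h W); first by exists W.
  by have [_ WE] := hP W (DC' W DW); move: Wx; rewrite {1}WE.
Qed.

Hypothesis fopen : forall A, open A -> open (f @` A).
Hypothesis fquot : forall B, open (f @^-1` B) -> open B.

Lemma closure_preimage (A : set Y) : f @^-1` closure A = closure (f @^-1` A).
Proof.
apply/seteqP; split => x /=.
  move=> cx B nB.
  have [B' [oB' B'x sB]] := open_nbhs_small _ _ nB.
  have nfB : nbhs (f x) (f @` B') by apply: open_nbhs_nbhs; split; [exact: fopen | exists x].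
  have [y [Ay [z B'z fzy]]] := cx _ nfB.
  by exists z; split; [rewrite /= fzy | exact: sB].
move=> cx B nB.
have nB' : nbhs x (f @^-1` B) by exact: cf.
have [z [Afz Bfz]] := cx _ nB'.
by exists (f z).
Qed.

Lemma bd_image : basically_disconnected X -> basically_disconnected Y.
Proof.
move=> bd g cg; apply: fquot; rewrite closure_preimage.
have -> : f @^-1` cozero g = cozero (g \o f) by [].
apply: bd => x; apply: continuous_comp; [exact: cf | exact: cg].
Qed.
End Images.

Section QProps.
Context {T : topologicalType} {G : topGroup T} (S : gseq G).
Local Notation mul := (tg_mul G).
Local Notation inv := (tg_inv G).
Local Notation one := (tg_one G).
Local Notation V := (gV S).
Local Notation N := (gN S).
Local Notation Q := (Qt S).
Local Notation pi := (qpi S).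

Lemma qpi_surj (a : Q) : exists x, pi x = a.
Proof. by exists (repr a); exact: qpiK. Qed.

Lemma q_quot (B : set Q) : open (pi @^-1` B) -> open B.
Proof. by []. Qed.

Lemma Q_lindelof : lindelof T -> lindelof Q.
Proof. exact: (@lindelof_image _ _ (qpi S) (pi_cont S) qpi_surj). Qed.

Lemma Q_bd : basically_disconnected T -> basically_disconnected Q.
Proof. exact: (@bd_image _ _ (qpi S) (pi_cont S) (pi_open S) q_quot). Qed.

Lemma gN_piE x : N x <-> pi x = pi one.
Proof.
rewrite piP; split => h.
  by have := gNV S _ h; rewrite tg_mulg1.
by have := gNV S _ h; rewrite tg_mulg1 invgK.
Qed.

Lemma Q_hausdorff : hausdorff_space Q.
Proof.
rewrite open_hausdorff => p q pq.
pose x := repr p; pose y := repr q.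
have nN : ~ N (mul (inv x) y).
  move=> /piP e; move/eqP: pq; apply.
  by rewrite -(qpiK S p) -(qpiK S q).
have [n nVn] : exists n, ~ V n (mul (inv x) y).
  by apply: contrapT => h; apply: nN => n; apply: contrapT => h'; apply: h; exists n.
have oVx : forall z, open (pi @` [set w | V n.+2 (mul (inv z) w)]).
  move=> z; apply: pi_open; apply: open_comp; [move=> w _; exact: (lmul_cont G) |].
  exact: (gV_onbhs S n.+2).1.
exists (pi @` [set w | V n.+2 (mul (inv x) w)], pi @` [set w | V n.+2 (mul (inv y) w)]).
  split; apply/mem_set.
    by exists x; [rewrite /= tg_mulVg; exact: V1 | exact: qpiK].
  by exists y; [rewrite /= tg_mulVg; exact: V1 | exact: qpiK].
split; [exact: oVx | exact: oVx |].
apply/eqP; rewrite -subset0 => w [[z1 h1 e1] [z2 h2 e2]].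
have /piP h12 : pi z1 = pi z2 by rewrite e1 e2.
apply: nVn.
have -> : mul (inv x) y = mul (mul (inv x) z1) (mul (mul (inv z1) z2) (inv (mul (inv y) z2))).
  by rewrite invMg invgK !tg_mulA !mulgK.
apply: gV_mul; first exact: Vsub.
apply: gV_mul; first exact: h12.
exact: gV_sym.
Qed.

Lemma Q_cp : countable_pseudocharacter (QG S).
Proof.
exists (fun n => pi @` V n); split.
  by move=> n; apply: pi_open; exact: (gV_onbhs S n).1.
apply/seteqP; split => q /=.
  by move=> -> n _; exists one => //; exact: V1.
move=> hq; rewrite -(qpiK S q); set x := repr q.
have Nx : N x.
  move=> n; have [v Vv e] := hq n.+1 I.
  have /piP h : pi v = pi x by rewrite e /x qpiK.
  rewrite -(mulVKg G v x); apply: gV_mul => //; exact: h.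
by apply/gN_piE.
Qed.

Lemma Q_discrete : discrete_top Q -> open N.
Proof.
move=> dQ.
have -> : N = pi @^-1` [set pi one].
  by apply/seteqP; split => x /gN_piE.
by apply: open_comp; [move=> z _; exact: pi_cont | exact: dQ].
Qed.
End QProps.

End MP8.
Import MP8.

Module MP9.

Section Sub.
Context {K : topologicalType} (H : topGroup K) (B : set K).
Local Notation mul := (tg_mul H).
Local Notation inv := (tg_inv H).
Local Notation one := (tg_one H).
Hypotheses (B1 : B one) (BM : forall x y, B x -> B y -> B (mul x y))
  (BV : forall x, B x -> B (inv x)) (oB : open B).
Local Notation S := (set_type B).

Definition sub_of {x} (h : B x) : S := exist _ x (mem_set h).
Definition smul (a b : S) : S := sub_of (BM _ _ (set_valP a) (set_valP b)).
Definition sinv (a : S) : S := sub_of (BV _ (set_valP a)).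
Definition sone : S := sub_of B1.

Lemma smulA x y z : smul x (smul y z) = smul (smul x y) z.
Proof. by apply: val_inj; rewrite /= tg_mulA. Qed.
Lemma smul1g x : smul sone x = x.
Proof. by apply: val_inj; rewrite /= tg_mul1g. Qed.
Lemma smulg1 x : smul x sone = x.
Proof. by apply: val_inj; rewrite /= tg_mulg1. Qed.
Lemma smulVg x : smul (sinv x) x = sone.
Proof. by apply: val_inj; rewrite /= tg_mulVg. Qed.
Lemma smulgV x : smul x (sinv x) = sone.
Proof. by apply: val_inj; rewrite /= tg_mulgV. Qed.

Lemma val_cont : continuous (val : S -> K).
Proof. by have := @initial_continuous _ K (@set_val K B); rewrite set_valE. Qed.

Lemma to_sub_cont (X : topologicalType) (f : X -> S) :
  continuous (fun x => val (f x)) -> continuous f.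
Proof.
move=> cf; apply: (@continuous_comp_initial _ _ _ (@set_val K B)).
by rewrite set_valE.
Qed.

Lemma smul_cont : continuous (fun p : S * S => smul p.1 p.2).
Proof.
apply: to_sub_cont => /=.
apply: (mulg_cont H _ (fun p : S * S => val p.1) (fun p : S * S => val p.2)).
  by move=> p; apply: continuous_comp; [exact: cvg_fst | exact: val_cont].
by move=> p; apply: continuous_comp; [exact: cvg_snd | exact: val_cont].
Qed.

Lemma sinv_cont : continuous sinv.
Proof.
apply: to_sub_cont => /=; apply: (invg_cont H); exact: val_cont.
Qed.

Definition SG : topGroup S :=
  TopGroup smulA smul1g smulg1 smulVg smulgV smul_cont sinv_cont.


Lemma open_sub (U : set S) : open U -> exists A : set K, open A /\ U = val @^-1` A.
Proof. by move=> [A oA <-]; exists A; rewrite set_valE. Qed.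

Lemma nbhs_sub (s : S) (W : set S) : nbhs s W ->
  exists A : set K, [/\ open A, A (val s) & forall t : S, A (val t) -> W t].
Proof.
move=> nW; have [U [oU Us sUW]] := open_nbhs_small _ _ nW.
have [A [oA UA]] := open_sub U oU.
exists A; split; first by [].
  by move: Us; rewrite UA.
by move=> t At; apply: sUW; rewrite UA.
Qed.

Lemma val_sub_of x (h : B x) : val (sub_of h) = x. Proof. by []. Qed.

Lemma S_hausdorff : hausdorff_space K -> hausdorff_space S.
Proof.
rewrite !open_hausdorff => hK s t st.
have vst : val s != val t by apply: contra st => /eqP /val_inj ->.
have [[A1 A2] /= [/set_mem A1s /set_mem A2t] [oA1 oA2 /eqP A0]] := hK _ _ vst.
exists (val @^-1` A1, val @^-1` A2) => /=.
  by split; apply/mem_set.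
split.
- by apply: open_comp => // z _; exact: val_cont.
- by apply: open_comp => // z _; exact: val_cont.
apply/eqP; rewrite -subset0 => z [h1 h2].
by have : (A1 `&` A2) (val z) by []; rewrite A0.
Qed.

Lemma B_closed : closed B.
Proof.
rewrite -openC openE => x nBx.
rewrite /interior (nbhs_translate H).
have nB : nbhs one B by apply: open_nbhs_nbhs.
apply: filterS nB => z Bz /= Bxz; apply: nBx.
by rewrite -(mulgK H z x); apply: BM => //; exact: BV.
Qed.

Definition retr (x : K) : S :=
  match pselect (B x) with left h => sub_of h | right _ => sone end.

Lemma retr_val (s : S) : retr (val s) = s.
Proof.
rewrite /retr; case: pselect => [h|]; last by case; exact: set_valP.
by apply: val_inj.
Qed.

Lemma retr_cont : continuous retr.
Proof.
move=> x.
have [Bx|nBx] := pselect (B x).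
  move=> W; rewrite /retr; case: pselect => // h nW.
  have [A [oA Ax sA]] := nbhs_sub _ _ nW.
  have nAB : nbhs x (A `&` B) by apply: open_nbhs_nbhs; split => //; exact: openI.
  apply: filterS nAB => y [Ay By] /=; rewrite /retr; case: pselect => // hy.
  by apply: sA.
apply: (cvg_near_cst (retr x)).
have nB : nbhs x (~` B) by apply: open_nbhs_nbhs; split => //; exact/closed_openC/B_closed.
apply: filterS nB => y nBy; rewrite /retr.
by case: pselect => // _; case: pselect.
Qed.

Lemma S_lindelof : lindelof K -> lindelof S.
Proof.
apply: (@lindelof_image _ _ retr retr_cont).
by move=> s; exists (val s); exact: retr_val.
Qed.

Section BD.
Variable f : S -> Rdefinitions.R.
Hypothesis cf : continuous f.

Definition fext (x : K) : Rdefinitions.R :=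
  match pselect (B x) with left h => f (sub_of h) | right _ => 0%R end.

Lemma fext_val s : fext (val s) = f s.
Proof.
rewrite /fext; case: pselect => [h|]; last by case; exact: set_valP.
by congr f; apply: val_inj.
Qed.

Lemma fext_cont : continuous fext.
Proof.
move=> x.
have [Bx|nBx] := pselect (B x).
  move=> W; rewrite /fext; case: pselect => // h nW.
  have nW' := cf (sub_of h) W nW.
  have [A [oA Ax sA]] := nbhs_sub _ _ nW'.
  have nAB : nbhs x (A `&` B) by apply: open_nbhs_nbhs; split => //; exact: openI.
  apply: filterS nAB => y [Ay By] /=; rewrite /fext; case: pselect => // hy.
  exact: (sA (sub_of hy)).
apply: (cvg_near_cst (fext x)).
have nB : nbhs x (~` B) by apply: open_nbhs_nbhs; split => //; exact/closed_openC/B_closed.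
apply: filterS nB => y nBy; rewrite /fext.
by case: pselect => // _; case: pselect.
Qed.

Lemma closure_sub : closure (cozero f) = val @^-1` closure (cozero fext).
Proof.
apply/seteqP; split => s /=.
  move=> cs W nW.
  have nW' : nbhs s (val @^-1` W) by exact: val_cont.
  have [t [ft Wt]] := cs _ nW'.
  by exists (val t); split => //; rewrite /cozero /= fext_val.
move=> cs W nW.
have [A [oA As sA]] := nbhs_sub _ _ nW.
have nAB : nbhs (val s) (A `&` B).
  by apply: open_nbhs_nbhs; split; [exact: openI | split => //; exact: set_valP].
have [y [fy [Ay By]]] := cs _ nAB.
exists (sub_of By); split; last exact: sA.
by rewrite /cozero /= -fext_val.
Qed.
End BD.

Lemma S_bd : basically_disconnected K -> basically_disconnected S.
Proof.
move=> bd f cf; rewrite closure_sub //.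
apply: open_comp; [move=> z _; exact: val_cont | apply: bd; exact: fext_cont].
Qed.

Lemma S_cp : countable_pseudocharacter H -> countable_pseudocharacter SG.
Proof.
move=> [Oc [oO O1]]; exists (fun n => val @^-1` Oc n); split.
  by move=> n; apply: open_comp => // z _; exact: val_cont.
apply/seteqP; split => s /=.
  by move=> -> n _; have : [set one] one by []; rewrite O1; apply.
move=> hs; apply: val_inj => /=.
have : (\bigcap_n Oc n) (val s) by move=> n _; exact: hs.
by rewrite -O1.
Qed.

Lemma S_nondiscrete : ~ discrete_top K -> ~ discrete_top S.
Proof.
move=> ndK dS; apply: ndK; apply: (open_one_discrete H).
have [A [oA E]] := open_sub _ (dS [set sone]).
have -> : [set one] = A `&` B.
  apply/seteqP; split => y /=.
    by move=> ->; split => //; have : [set sone] sone by []; rewrite E.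
  move=> [Ay By]; have : (val @^-1` A) (sub_of By) by [].
  by rewrite -E => /(congr1 val).
exact: openI.
Qed.

Lemma S_boolean : (forall x, B x -> mul x x = one) -> boolean_group SG.
Proof. by move=> hB s; apply: val_inj => /=; apply: hB; exact: set_valP. Qed.

End Sub.

End MP9.
Import MP9.

Module MP10.

Inductive gen {K : topologicalType} (H : topGroup K) (V0 : set K) : K -> Prop :=
  | gen1 : gen H V0 (tg_one H)
  | genM v x : V0 v -> gen H V0 x -> gen H V0 (tg_mul H v x).

Section Gen.
Context {K : topologicalType} (H : topGroup K) (V0 : set K).
Local Notation mul := (tg_mul H).
Local Notation inv := (tg_inv H).
Local Notation one := (tg_one H).
Hypotheses (V01 : V0 one) (oV0 : open V0)
  (V0F : forall x y, V0 x -> V0 y -> mul (mul x y) (mul x y) = one).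

Lemma V0sq v : V0 v -> mul v v = one.
Proof. by move=> Vv; have := V0F _ _ Vv V01; rewrite tg_mulg1. Qed.

Lemma V0comm v w : V0 v -> V0 w -> mul v w = mul w v.
Proof.
move=> Vv Vw; have h := V0F _ _ Vv Vw.
have hv := V0sq _ Vv; have hw := V0sq _ Vw.
have iv : inv v = v by rewrite -(invg_eq1 H _ _ hv).
have iw : inv w = w by rewrite -(invg_eq1 H _ _ hw).
have := invg_eq1 H _ _ h; rewrite invMg iv iw; exact.
Qed.

Lemma genM2 x y : gen H V0 x -> gen H V0 y -> gen H V0 (mul x y).
Proof.
move=> gx gy; elim: gx => [|v x' Vv _ IH]; first by rewrite tg_mul1g.
by rewrite -tg_mulA; apply: genM.
Qed.

Lemma gen_inv_prop x : gen H V0 x -> mul x x = one /\ forall w, V0 w -> mul x w = mul w x.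
Proof.
move=> gx; elim: gx => [|v x' Vv _ [sq cm]]; first by split => [|w _]; rewrite ?tg_mul1g ?tg_mulg1.
split.
  rewrite -tg_mulA [mul x' (mul v x')]tg_mulA (cm v Vv).
  by rewrite -[mul (mul v x') x']tg_mulA sq tg_mulg1; exact: V0sq.
move=> w Vw; rewrite -tg_mulA (cm w Vw) tg_mulA (V0comm v w) // tg_mulA.
by [].
Qed.

Lemma gen_sq x : gen H V0 x -> mul x x = one.
Proof. by move=> /gen_inv_prop []. Qed.

Lemma gen_V x : gen H V0 x -> gen H V0 (inv x).
Proof. by move=> gx; rewrite -(invg_eq1 H _ _ (gen_sq _ gx)). Qed.

Lemma gen_open : open (gen H V0).
Proof.
rewrite openE => x gx; rewrite /interior (nbhs_translate H).
have nV : nbhs one V0 by apply: open_nbhs_nbhs.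
apply: filterS nV => z Vz; apply: genM2 => //.
by rewrite -(tg_mulg1 H z); apply: genM => //; exact: gen1.
Qed.

End Gen.

Lemma left_to_right :
  (exists (T : topologicalType) (G : topGroup T),
      [/\ lindelof T, basically_disconnected T, hausdorff_space T & ~ P_space T]) ->
  (exists (T : topologicalType) (G : topGroup T),
      [/\ ~ discrete_top T, lindelof T, boolean_group G,
          basically_disconnected T & hausdorff_space T]
      /\ countable_pseudocharacter G).
Proof.
move=> [T [G [li bd hs nP]]].
have [A [[An [oAn AE]] nA]] : exists A : set T, Gdelta A /\ ~ open A.
  apply: contrapT => h; apply: nP => A GA; apply: contrapT => nA; apply: h.
  by exists A.
have [a [Aa naA]] : exists a, A a /\ ~ nbhs a A.
  apply: contrapT => h; apply: nA; rewrite openE => a Aa.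
  by apply: contrapT => na; apply: h; exists a.
pose A' n := [set x | An n (tg_mul G a x)].
have hA' n : onbhs G (A' n).
  split; first by apply: open_comp => // z _; exact: (lmul_cont G).
  rewrite /A' /= tg_mulg1.
  by move: Aa; rewrite AE; apply.
have [V [hV hVs hVm hVA hVc]] := good_seq G li A' hA'.
pose S := @GSeq T G V hV hVs hVm hVc.
have nNo : ~ open (gN S).
  move=> oN; apply: naA; rewrite (nbhs_translate G).
  have nN : nbhs (tg_one G) (gN S) by apply: open_nbhs_nbhs; split => //; exact: gN1.
  apply: filterS nN => x Nx; rewrite AE => n _.
  exact: (hVA n x (Nx n)).
pose K := Qt S; pose H := QG S.
have liK : lindelof K := Q_lindelof S li.
have bdK : basically_disconnected K := Q_bd S bd.
have hsK : hausdorff_space K := Q_hausdorff S.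
have cpK : countable_pseudocharacter H := Q_cp S.
have ndK : ~ discrete_top K := fun d => nNo (Q_discrete S d).
have nF := frolik H liK bdK hsK cpK.
have [V0 [oV0 V01 V0s V0F _]] := sym_nbhs H _ nF.
pose B := gen H V0.
have B1 : B (tg_one H) := gen1 H V0.
have BM : forall x y, B x -> B y -> B (tg_mul H x y) := genM2 H V0.
have BV : forall x, B x -> B (tg_inv H x) := gen_V H V0 V01 V0F.
have oB : open B := gen_open H V0 V01 oV0.
exists (set_type B), (SG H B B1 BM BV); split; [split|].
- exact: (S_nondiscrete H B B1 oB ndK).
- exact: (S_lindelof H B B1 BM BV oB liK).
- exact: (S_boolean H B B1 BM BV (gen_sq H V0 V01 V0F)).
- exact: (S_bd H B B1 BM BV oB bdK).
- exact: (S_hausdorff B hsK).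
- exact: (S_cp H B B1 BM BV cpK).
Qed.


End MP10.
Import MP10.

Theorem corollary2 :
  (exists (T : topologicalType) (G : topGroup T),
      [/\ lindelof T, basically_disconnected T, hausdorff_space T & ~ P_space T])
  <->
  (exists (T : topologicalType) (G : topGroup T),
      [/\ ~ discrete_top T, lindelof T, boolean_group G,
          basically_disconnected T & hausdorff_space T]
      /\ countable_pseudocharacter G).
Proof. split; [exact: left_to_right | exact: right_to_left]. Qed.
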